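(* Let $\kappa>\omega$ be a cardinal, $S_\kappa$ the group of all permutations of $\kappa$, and $\mathcal{E}$ the coarse structure on $\kappa$ with base $\{E_H: H\subseteq S_\kappa \text{ finite}, \ \mathrm{id}\in H\}$, $E_H=\{(x,y):y\in Hx\}$. Let $\mathcal{F}$ be the discrete coarse structure on $\kappa$ defined by the bornology $[\kappa]^{<\kappa}$ and $\mathcal{E}'=\mathcal{F}\vee\mathcal{E}$. Then: the bounded sets of $(\kappa,\mathcal{E})$ are exactly the finite subsets; $(\kappa,\mathcal{E})$ is ultranormal but not extremely normal; $\mathcal{E}\subsetneq\mathcal{E}'$; and $(\kappa,\mathcal{E}')$ is extremely normal but not maximal.
   Context: A ballean $(X,\mathcal{E})$ is a set with a coarse structure. $E[x]=\{y:(x,y)\in E\}$, $E[A]=\bigcup_{a\in A}E[a]$. $Y$ is bounded if $Y\subseteq E[x]$ for some $x$ and $E\in\mathcal{E}$. $A$ is large if $X=E[A]$ for some $E$. Subsets $A,B$ are asymptotically disjoint if $E[A]\cap E[B]$ is bounded for every $E$. An unbounded ballean is ultranormal if no two unbounded subsets are asymptotically disjoint; extremely normal if every unbounded subset is large; maximal if $X$ is bounded in every coarse structure strictly containing $\mathcal{E}$. For a bornology $\mathcal{B}$ on $X$, the discrete coarse structure defined by $\mathcal{B}$ has base $\{E_B:B\in\mathcal{B}\}$ where $E_B[x]=B$ for $x\in B$ and $E_B[x]=\{x\}$ for $x\notin B$. $[\kappa]^{<\kappa}$ is the family of subsets of $\kappa$ of cardinality $<\kappa$. For coarse structures $\mathcal{E}_1,\mathcal{E}_2$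 on $X$, $\mathcal{E}_1\vee\mathcal{E}_2$ is the smallest coarse structure containing both. *)

(* Defs.v *)
From Stdlib Require Import List.
Import ListNotations.
Set Implicit Arguments.

Section Ballean.
Variable X : Type.

Definition rel := X -> X -> Prop.
Definition diag : rel := fun x y => x = y.
Definition subrel (E F : rel) : Prop := forall x y, E x y -> F x y.
Definition rinv (E : rel) : rel := fun x y => E y x.
Definition rcomp (E F : rel) : rel := fun x z => exists y, E x y /\ F y z.
Definition runion (E F : rel) : rel := fun x y => E x y \/ F x y.

Record coarse_structure (C : rel -> Prop) : Prop := {
  cs_diag : C diag;
  cs_has_diag : forall E, C E -> subrel diag E;
  cs_inv : forall E, C E -> C (rinv E);
  cs_comp : forall E F, C E -> C F -> C (rcomp E F);
  cs_union : forall E F, C E -> C F -> C (runion E F);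
  cs_sub : forall E E', C E -> subrel diag E' -> subrel E' E -> C E'
}.

Definition ball (E : rel) (x : X) : X -> Prop := fun y => E x y.
Definition ballset (E : rel) (A : X -> Prop) : X -> Prop :=
  fun y => exists a, A a /\ E a y.

Definition bounded (C : rel -> Prop) (Y : X -> Prop) : Prop :=
  exists x E, C E /\ forall y, Y y -> ball E x y.

Definition unbounded_ballean (C : rel -> Prop) : Prop :=
  ~ bounded C (fun _ => True).

Definition large (C : rel -> Prop) (A : X -> Prop) : Prop :=
  exists E, C E /\ forall x, ballset E A x.

Definition asymp_disjoint (C : rel -> Prop) (A B : X -> Prop) : Prop :=
  forall E, C E -> bounded C (fun y => ballset E A y /\ ballset E B y).

Definition ultranormal (C : rel -> Prop) : Prop :=
  unbounded_ballean C /\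
  forall A B, ~ bounded C A -> ~ bounded C B -> ~ asymp_disjoint C A B.

Definition extremely_normal (C : rel -> Prop) : Prop :=
  unbounded_ballean C /\ forall A, ~ bounded C A -> large C A.

Definition maximal (C : rel -> Prop) : Prop :=
  unbounded_ballean C /\
  forall C', coarse_structure C' -> (forall E, C E -> C' E) ->
    (exists E, C' E /\ ~ C E) -> bounded C' (fun _ => True).

Definition cjoin (C1 C2 : rel -> Prop) : rel -> Prop :=
  fun E => forall C, coarse_structure C -> (forall F, C1 F -> C F) ->
             (forall F, C2 F -> C F) -> C E.

Definition finite_set (Y : X -> Prop) : Prop :=
  exists l : list X, forall y, Y y -> In y l.

(* |A| < |X| (for a subset A of X: no injection of X into A) *)
Definition small (A : X -> Prop) : Prop :=
  ~ exists f : X -> X, (forall x y, f x = f y -> x = y) /\ forall x, A (f x).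

Definition bij (h : X -> X) : Prop :=
  exists g : X -> X, (forall x, g (h x) = x) /\ (forall y, h (g y) = y).

(* E_H for H = {id} ∪ H0, H0 a finite list of permutations *)
Definition EH (H0 : list (X -> X)) : rel :=
  fun x y => y = x \/ exists h, In h H0 /\ y = h x.

Definition perm_coarse : rel -> Prop :=
  fun E => subrel diag E /\
    exists H0 : list (X -> X), (forall h, In h H0 -> bij h) /\ subrel E (EH H0).

Definition EB (B : X -> Prop) : rel := fun x y => x = y \/ (B x /\ B y).

Definition small_discrete_coarse : rel -> Prop :=
  fun E => subrel diag E /\ exists B, small B /\ subrel E (EB B).

End Ballean.

(* Main.v *)
Require Import Defs.
From Stdlib Require Import List.
From Stdlib Require Import Classical ClassicalEpsilon Lia Arith Cantor.
From mathcomp Require all_boot boolp classical_sets.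

Module ZornW.
Import mathcomp.boot.all_boot mathcomp.classical.boolp mathcomp.classical.classical_sets.
Local Open Scope classical_set_scope.
Lemma my_zorn (T:Type) (P : (T->Prop)->Prop) :
 (forall F : (T->Prop)->Prop, (forall X, F X -> P X) ->
   (forall X Y, F X -> F Y -> (forall t, X t -> Y t) \/ (forall t, Y t -> X t)) ->
   P (fun t => exists X, F X /\ X t)) ->
 exists A, P A /\ forall B, P B -> (forall t, A t -> B t) -> forall t, B t -> A t.
Proof.
move=> H.
have H' : (forall F : set (set T), F `<=` P -> total_on F subset ->
      P (\bigcup_(X in F) X)).
  move=> F FP Ftot.
  have := H F FP Ftot.
  congr P. apply: funext => t; apply: propext; split.
  + by case=> X [FX Xt]; exists X.
  + by case=> X FX Xt; exists X.
have [A [PA Amax]] := @Zorn_bigcup T P H'.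
exists A; split=> // B PB AB t Bt.
apply: contrapT => nAt.
apply: (Amax B) => //. split; first exact: AB.
move=> BA. exact: nAt (BA t Bt).
Qed.
End ZornW.
Import ZornW.
Set Bullet Behavior "Strict Subproofs".
Import ListNotations.

Lemma choice_fun {A B : Type} (R : A -> B -> Prop) :
  (forall x, exists y, R x y) -> exists f, forall x, R x (f x).
Proof.
  intros H. exists (fun x => proj1_sig (constructive_indefinite_description _ (H x))).
  intro x. exact (proj2_sig (constructive_indefinite_description _ (H x))).
Qed.

Lemma pigeon {T : Type} (s : nat -> T) (l : list T) :
  (forall n m, s n = s m -> n = m) -> (forall n, In (s n) l) -> False.
Proof.
  intros Hi Hl.
  assert (ND : NoDup (map s (seq 0 (S (length l))))).
  { apply NoDup_map_NoDup_ForallPairs.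
    - intros a b _ _. apply Hi.
    - apply seq_NoDup. }
  assert (Hinc : incl (map s (seq 0 (S (length l)))) l).
  { intros y Hy. apply in_map_iff in Hy. destruct Hy as [n [<- _]]. apply Hl. }
  pose proof (NoDup_incl_length ND Hinc) as Hle.
  rewrite length_map, length_seq in Hle. lia.
Qed.

Section Main.
Variable K : Type.
Hypothesis Kunc : ~ exists f : K -> nat, forall x y, f x = f y -> x = y.

Lemma K_inh : inhabited K.
Proof.
  apply NNPP. intro H. apply Kunc. exists (fun _ => 0).
  intros x. exfalso. apply H. exact (inhabits x).
Qed.

Lemma list_not_all (l : list K) : ~ (forall x : K, In x l).
Proof.
  intro H. apply Kunc.
  destruct (choice_fun (fun x i => nth_error l i = Some x)) as [f Hf].
  { intro x. apply In_nth_error. apply H. }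
  exists f. intros x y E. pose proof (Hf x) as Hx. pose proof (Hf y) as Hy.
  rewrite E in Hx. rewrite Hx in Hy. injection Hy. auto.
Qed.

Lemma not_finite_K : ~ finite_set (fun _ : K => True).
Proof. intros [l Hl]. apply (list_not_all l). intro x. apply Hl. exact I. Qed.

Lemma seq_extract (A : K -> Prop) : ~ finite_set A ->
  exists a : nat -> K, (forall n m, a n = a m -> n = m) /\ forall n, A (a n).
Proof.
  intro HA.
  destruct (choice_fun (fun (l : list K) y => A y /\ ~ In y l)) as [nx Hnx].
  { intro l. apply NNPP. intro H. apply HA. exists l. intros y Ay.
    apply NNPP. intro Hn. apply H. exists y. auto. }
  set (L := fix L (n : nat) : list K := match n with 0 => [] | S n => nx (L n) :: L n end).
  exists (fun n => nx (L n)).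
  assert (Hin : forall n m, m < n -> In (nx (L m)) (L n)).
  { induction n; intros m Hm. lia.
    simpl. destruct (Nat.eq_dec m n) as [->|Hne]. left; reflexivity.
    right. apply IHn. lia. }
  split.
  - intros n m E. destruct (Nat.lt_total n m) as [H|[H|H]]; auto.
    + exfalso. apply (proj2 (Hnx (L m))). rewrite <- E. apply Hin; auto.
    + exfalso. apply (proj2 (Hnx (L n))). rewrite E. apply Hin; auto.
  - intro n. apply (proj1 (Hnx (L n))).
Qed.

Lemma involution (U : K -> Prop) (f : K -> K) :
  (forall x, U x -> ~ U (f x)) -> (forall x y, U x -> U y -> f x = f y -> x = y) ->
  exists h : K -> K, (forall x, h (h x) = x) /\ forall x, U x -> h x = f x.
Proof.
  intros H1 H2.
  destruct (choice_fun (fun x z => (U x /\ z = f x) \/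
     (~ U x /\ exists u, U u /\ f u = x /\ z = u) \/
     (~ U x /\ (~ exists u, U u /\ f u = x) /\ z = x))) as [h Hh].
  { intro x. destruct (classic (U x)) as [Ux|nUx].
    - exists (f x). left; auto.
    - destruct (classic (exists u, U u /\ f u = x)) as [[u [Uu Eu]]|Hn].
      + exists u. right; left. split; auto. exists u; auto.
      + exists x. right; right; auto. }
  assert (HU : forall x, U x -> h x = f x).
  { intros x Ux. destruct (Hh x) as [[_ E]|[[nU _]|[nU _]]]; auto; contradiction. }
  exists h. split; auto.
  intro x. destruct (Hh x) as [[Ux E]|[[nU [u [Uu [Eu E]]]]|[nU [Hn E]]]].
  - rewrite E. destruct (Hh (f x)) as [[Uf _]|[[nU' [u [Uu [Eu E']]]]|[nU' [Hn E']]]].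
    + exfalso. exact (H1 x Ux Uf).
    + rewrite E'. apply H2; auto.
    + exfalso. apply Hn. exists x; auto.
  - rewrite E, (HU u Uu). auto.
  - rewrite E. rewrite E. auto.
Qed.

Lemma inv_bij (h : K -> K) : (forall x, h (h x) = x) -> bij h.
Proof. intro H. exists h. auto. Qed.

Lemma swap_exists (x0 y : K) : exists h, bij h /\ h x0 = y.
Proof.
  destruct (classic (y = x0)) as [->|Hne].
  - exists (fun z => z). split; auto. exists (fun z => z); auto.
  - destruct (involution (fun z => z = x0) (fun _ => y)) as [h [Hh1 Hh2]].
    + intros x Ex Ey. apply Hne. auto.
    + intros x z Ex Ez _. congruence.
    + exists h. split. apply inv_bij; auto. apply Hh2. auto.
Qed.

Lemma bounded_finite Y : bounded (@perm_coarse K) Y -> finite_set Y.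
Proof.
  intros [x [E [[_ [H0 [_ Hsub]]] HY]]].
  exists (x :: map (fun h => h x) H0). intros y Hy.
  destruct (Hsub x y (HY y Hy)) as [->|[h [Hh ->]]].
  - left; auto.
  - right. apply in_map_iff. exists h; auto.
Qed.

Lemma finite_bounded Y : finite_set Y -> bounded (@perm_coarse K) Y.
Proof.
  intros [l Hl]. destruct K_inh as [x0].
  assert (Hex : exists H0 : list (K -> K), (forall h, In h H0 -> bij h) /\
           forall y, In y l -> exists h, In h H0 /\ h x0 = y).
  { clear Hl. induction l as [|y l IH].
    - exists []. split. intros h []. intros y [].
    - destruct IH as [H0 [Hb Hc]]. destruct (swap_exists x0 y) as [h [hb hy]].
      exists (h :: H0). split.
      + intros g [<-|Hg]; auto.
      + intros z [<-|Hz].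
        * exists h. split; auto. left; auto.
        * destruct (Hc z Hz) as [g [Hg Eg]]. exists g. split; auto. right; auto. }
  destruct Hex as [H0 [Hb Hc]].
  exists x0, (EH H0). split.
  - split. intros x y E. left. symmetry. exact E.
    exists H0. split; auto. intros x y E; exact E.
  - intros y Hy. destruct (Hc y (Hl y Hy)) as [h [Hh Eh]]. right. exists h. auto.
Qed.


Lemma to_nat_inj p q : to_nat p = to_nat q -> p = q.
Proof. intro E. rewrite <- (cancel_of_to p), <- (cancel_of_to q), E. reflexivity. Qed.

Definition inj_into (A : K -> Prop) :=
  exists f : K -> K, (forall x y, f x = f y -> x = y) /\ forall x, A (f x).

Lemma absorb (A : K -> Prop) : ~ finite_set A ->
  exists io : K -> nat -> K, (forall x n, A x -> A (io x n)) /\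
    (forall x n y m, A x -> A y -> io x n = io y m -> x = y /\ n = m).
Proof.
  intro HA.
  set (Good := fun S : (nat -> K) -> Prop =>
    (forall s, S s -> (forall n, A (s n)) /\ (forall n m, s n = s m -> n = m)) /\
    (forall s s' n m, S s -> S s' -> s n = s' m -> s = s')).
  destruct (my_zorn _ Good) as [S [GS Smax]].
  { intros F FG Ftot. split.
    - intros s [X [FX Xs]]. exact (proj1 (FG X FX) s Xs).
    - intros s s' n m [X [FX Xs]] [Y [FY Ys']] E.
      destruct (Ftot X Y FX FY) as [HXY|HYX].
      + exact (proj2 (FG Y FY) s s' n m (HXY s Xs) Ys' E).
      + exact (proj2 (FG X FX) s s' n m Xs (HYX s' Ys') E). }
  destruct GS as [GS1 GS2].
  set (F := fun x => A x /\ ~ exists s n, S s /\ s n = x).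
  assert (Ffin : finite_set F).
  { apply NNPP. intro Hn. destruct (seq_extract F Hn) as [s0 [s0i s0F]].
    assert (GS' : Good (fun s => S s \/ s = s0)).
    { split.
      - intros s [Ss| ->].
        + apply GS1; auto.
        + split; auto. intro n. exact (proj1 (s0F n)).
      - intros s s' n m [Ss| ->] [Ss'| ->] E; auto.
        + eapply GS2; eauto.
        + exfalso. apply (proj2 (s0F m)). exists s, n. auto.
        + exfalso. apply (proj2 (s0F n)). exists s', m. auto. }
    assert (S s0) by (apply (Smax _ GS'); auto).
    apply (proj2 (s0F 0)). exists s0, 0. auto. }
  destruct Ffin as [l Hl].
  assert (HS0 : exists s0, S s0).
  { apply NNPP. intro Hn. apply HA. exists l. intros y Ay. apply Hl. split; auto.
    intros [s [n [Ss _]]]. apply Hn. exists s; auto. }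
  destruct HS0 as [s0 Ss0].
  destruct (choice_fun (fun (p : K * nat) z =>
     (exists s n, S s /\ s n = fst p /\ s <> s0 /\ z = s (to_nat (n, snd p))) \/
     (exists n, s0 n = fst p /\ z = s0 (2 * to_nat (n, snd p))) \/
     (F (fst p) /\ exists i, nth_error l i = Some (fst p) /\ z = s0 (2 * to_nat (i, snd p) + 1)) \/
     (~ A (fst p) /\ z = fst p))) as [g Hg].
  { intros [x m]. simpl.
    destruct (classic (exists s n, S s /\ s n = x)) as [[s [n [Ss Es]]]|Hn].
    - destruct (classic (s = s0)) as [->|Hne].
      + eexists. right; left. exists n. split; eauto.
      + eexists. left. exists s, n. repeat split; eauto.
    - destruct (classic (A x)) as [Ax|nAx].
      + assert (Fx : F x) by (split; auto).
        destruct (In_nth_error l x (Hl x Fx)) as [i Hi].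
        eexists. right; right; left. split; auto. exists i. split; eauto.
      + eexists. right; right; right. split; eauto. }
  exists (fun x n => g (x, n)). split.
  - intros x n Ax. destruct (Hg (x, n)) as [[s [n' [Ss [_ [_ ->]]]]]|[[n' [_ ->]]|[[_ [i [_ ->]]]|[nA _]]]]; cbn [fst snd] in *.
    + apply GS1; auto.
    + apply GS1; auto.
    + apply GS1; auto.
    + contradiction.
  - intros x n y m Ax Ay E.
    destruct (Hg (x, n)) as [[s [n' [Ss [Ex [Nx Zx]]]]]|[[n' [Ex Zx]]|[[Fx [i [Ex Zx]]]|[nA _]]]];
    destruct (Hg (y, m)) as [[s2 [m' [Ss2 [Ey [Ny Zy]]]]]|[[m' [Ey Zy]]|[[Fy [j [Ey Zy]]]|[nA2 _]]]];
    cbn [fst snd] in *; try contradiction; rewrite E in Zx; rewrite Zx in Zy; clear E Zx.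
    + pose proof (GS2 _ _ _ _ Ss Ss2 Zy) as <-.
      apply (proj2 (GS1 _ Ss)) in Zy. apply to_nat_inj in Zy. injection Zy. intros -> ->.
      subst. auto.
    + exfalso. apply Nx. exact (GS2 _ _ _ _ Ss Ss0 Zy).
    + exfalso. apply Nx. exact (GS2 _ _ _ _ Ss Ss0 Zy).
    + exfalso. apply Ny. symmetry. exact (GS2 _ _ _ _ Ss0 Ss2 Zy).
    + apply (proj2 (GS1 _ Ss0)) in Zy.
      assert (to_nat (n', n) = to_nat (m', m)) as Zy' by lia.
      apply to_nat_inj in Zy'. injection Zy'. intros -> ->. subst. auto.
    + exfalso. apply (proj2 (GS1 _ Ss0)) in Zy. lia.
    + exfalso. apply Ny. symmetry. exact (GS2 _ _ _ _ Ss0 Ss2 Zy).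
    + exfalso. apply (proj2 (GS1 _ Ss0)) in Zy. lia.
    + apply (proj2 (GS1 _ Ss0)) in Zy.
      assert (to_nat (i, n) = to_nat (j, m)) as Zy' by lia.
      apply to_nat_inj in Zy'. injection Zy'. intros -> ->. split; auto.
      rewrite Ex in Ey. injection Ey. auto.
Qed.


Lemma compare (P Q : K -> Prop) :
  (exists g, (forall x, P x -> Q (g x)) /\ forall x y, P x -> P y -> g x = g y -> x = y) \/
  (exists g, (forall y, Q y -> P (g y)) /\ forall x y, Q x -> Q y -> g x = g y -> x = y).
Proof.
  set (Good := fun M : K * K -> Prop =>
    (forall p, M p -> P (fst p) /\ Q (snd p)) /\
    (forall x y y', M (x, y) -> M (x, y') -> y = y') /\
    (forall x x' y, M (x, y) -> M (x', y) -> x = x')).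
  destruct (my_zorn _ Good) as [M [GM Mmax]].
  { intros F FG Ftot. split; [|split].
    - intros p [X [FX Xp]]. exact (proj1 (FG X FX) p Xp).
    - intros x y y' [X [FX Xs]] [Y [FY Ys']].
      destruct (Ftot X Y FX FY) as [HXY|HYX].
      + exact (proj1 (proj2 (FG Y FY)) x y y' (HXY _ Xs) Ys').
      + exact (proj1 (proj2 (FG X FX)) x y y' Xs (HYX _ Ys')).
    - intros x x' y [X [FX Xs]] [Y [FY Ys']].
      destruct (Ftot X Y FX FY) as [HXY|HYX].
      + exact (proj2 (proj2 (FG Y FY)) x x' y (HXY _ Xs) Ys').
      + exact (proj2 (proj2 (FG X FX)) x x' y Xs (HYX _ Ys')). }
  destruct GM as [G1 [G2 G3]].
  destruct (classic (forall x, P x -> exists y, M (x, y))) as [Hall|Hn].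
  - left. destruct (choice_fun (fun x y => P x -> M (x, y))) as [g Hg].
    { intro x. destruct (classic (P x)) as [Px|nPx].
      - destruct (Hall x Px) as [y Hy]. exists y; auto.
      - exists x. intro; contradiction. }
    exists g. split.
    + intros x Px. exact (proj2 (G1 _ (Hg x Px))).
    + intros x y Px Py E. apply (G3 x y (g x)); auto. rewrite E; auto.
  - right. apply not_all_ex_not in Hn. destruct Hn as [x0 Hx0].
    apply imply_to_and in Hx0. destruct Hx0 as [Px0 Hx0].
    assert (Hall : forall y, Q y -> exists x, M (x, y)).
    { intros y0 Qy0. apply NNPP. intro Hy0.
      assert (GM' : Good (fun p => M p \/ p = (x0, y0))).
      { split; [|split].
        - intros p [Mp| ->]; auto.
        - intros x y y' [H1|H1] [H2|H2].
          + eauto.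
          + injection H2; intros -> ->. exfalso. apply Hx0. exists y; auto.
          + injection H1; intros -> ->. exfalso. apply Hx0. exists y'; auto.
          + injection H1; injection H2; intros; subst; auto.
        - intros x x' y [H1|H1] [H2|H2].
          + eauto.
          + injection H2; intros -> ->. exfalso. apply Hy0. exists x; auto.
          + injection H1; intros -> ->. exfalso. apply Hy0. exists x'; auto.
          + injection H1; injection H2; intros; subst; auto. }
      apply Hx0. exists y0. apply (Mmax _ GM'); auto. }
    destruct (choice_fun (fun y x => Q y -> M (x, y))) as [g Hg].
    { intro y. destruct (classic (Q y)) as [Qy|nQy].
      - destruct (Hall y Qy) as [x Hx]. exists x; auto.
      - exists y. intro; contradiction. }
    exists g. split.
    + intros y Qy. exact (proj1 (G1 _ (Hg y Qy))).
    + intros x y Qx Qy E. apply (G2 (g x) x y); auto. rewrite E; auto.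
Qed.

Lemma prod_absorb (A : K -> Prop) (phi : K -> K * nat) :
  (forall x y, phi x = phi y -> x = y) -> (forall x, A (fst (phi x))) -> inj_into A.
Proof.
  intros Hi HA. destruct (classic (finite_set A)) as [[l Hl]|Hn].
  - exfalso. apply Kunc.
    destruct (choice_fun (fun x i => nth_error l i = Some (fst (phi x)))) as [f Hf].
    { intro x. apply In_nth_error. apply Hl. apply HA. }
    exists (fun x => to_nat (f x, snd (phi x))). intros x y E.
    apply to_nat_inj in E. injection E. intros E2 E1.
    apply Hi. pose proof (Hf x) as Hx. pose proof (Hf y) as Hy. rewrite E1 in Hx.
    rewrite Hx in Hy. injection Hy. intro E3.
    rewrite (surjective_pairing (phi x)), (surjective_pairing (phi y)), E2, E3. reflexivity.
  - destruct (absorb A Hn) as [io [io1 io2]].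
    exists (fun x => io (fst (phi x)) (snd (phi x))). split.
    + intros x y E. apply io2 in E; auto. destruct E as [E1 E2]. apply Hi.
      rewrite (surjective_pairing (phi x)), (surjective_pairing (phi y)), E1, E2. reflexivity.
    + intro x. apply io1. auto.
Qed.

Lemma split_inj (P : K -> Prop) : inj_into P \/ inj_into (fun x => ~ P x).
Proof.
  destruct (compare P (fun x => ~ P x)) as [[g [g1 g2]]|[g [g1 g2]]].
  - right.
    destruct (choice_fun (fun x p => (P x /\ p = (g x, 1)) \/ (~ P x /\ p = (x, 0)))) as [phi Hphi].
    { intro x. destruct (classic (P x)); eauto. }
    apply (prod_absorb _ phi).
    + intros x y E. destruct (Hphi x) as [[Px Ex]|[Px Ex]]; destruct (Hphi y) as [[Py Ey]|[Py Ey]];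
        rewrite Ex, Ey in E; injection E; intros; try lia; subst; auto.
    + intro x. destruct (Hphi x) as [[Px ->]|[Px ->]]; simpl; auto.
  - left.
    destruct (choice_fun (fun x p => (~ P x /\ p = (g x, 1)) \/ (P x /\ p = (x, 0)))) as [phi Hphi].
    { intro x. destruct (classic (P x)); eauto. }
    apply (prod_absorb _ phi).
    + intros x y E. destruct (Hphi x) as [[Px Ex]|[Px Ex]]; destruct (Hphi y) as [[Py Ey]|[Py Ey]];
        rewrite Ex, Ey in E; injection E; intros; try lia; subst; auto.
    + intro x. destruct (Hphi x) as [[Px ->]|[Px ->]]; simpl; auto.
Qed.

Lemma union_inj (A B : K -> Prop) : inj_into (fun x => A x \/ B x) -> inj_into A \/ inj_into B.
Proof.
  intros [f [fi fAB]]. destruct (split_inj (fun x => A (f x))) as [[g [gi gA]]|[g [gi gA]]].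
  - left. exists (fun x => f (g x)). split; auto.
  - right. exists (fun x => f (g x)). split; auto.
    intro x. destruct (fAB (g x)); auto. exfalso; apply (gA x); auto.
Qed.

Lemma small_union (A B : K -> Prop) : small A -> small B -> small (fun x => A x \/ B x).
Proof. intros HA HB H. destruct (union_inj A B H); auto. Qed.

Lemma small_sub (A B : K -> Prop) : (forall x, A x -> B x) -> small B -> small A.
Proof. intros H HB [f [fi fA]]. apply HB. exists f; auto. Qed.

Lemma small_single (x0 : K) : small (fun y => y = x0).
Proof.
  intros [f [fi fA]]. apply Kunc. exists (fun _ => 0). intros x y _. apply fi. rewrite (fA x), (fA y). auto.
Qed.

Lemma small_empty : small (fun _ : K => False).
Proof. intros [f [_ fA]]. destruct K_inh as [x]. exact (fA x). Qed.

Lemma not_small_all : ~ small (fun _ : K => True).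
Proof. intro H. apply H. exists (fun x => x). split; auto. Qed.

Lemma small_finite (A : K -> Prop) : finite_set A -> small A.
Proof.
  intros [l Hl] [f [fi fA]]. apply (list_not_all (map (fun x => x) [])).
  exfalso. apply Kunc.
  destruct (choice_fun (fun x i => nth_error l i = Some (f x))) as [g Hg].
  { intro x. apply In_nth_error. auto. }
  exists g. intros x y E. apply fi. pose proof (Hg x) as Hx. pose proof (Hg y) as Hy.
  rewrite E in Hx. rewrite Hx in Hy. injection Hy; auto.
Qed.

Lemma small_list_union {I : Type} (F : I -> K -> Prop) (ws : list I) :
  (forall w, In w ws -> small (F w)) -> small (fun y => exists w, In w ws /\ F w y).
Proof.
  induction ws as [|w ws IH]; intro H.
  - apply (small_sub _ (fun _ => False)).
    + intros y [w [[] _]].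
    + exact small_empty.
  - apply (small_sub _ (fun y => F w y \/ exists w', In w' ws /\ F w' y)).
    + intros y [w' [[<-|Hi] Hf]]; auto. right. exists w'; auto.
    + apply small_union. apply H; left; auto. apply IH. intros; apply H; right; auto.
Qed.

Lemma small_image (h : K -> K) (B : K -> Prop) : bij h -> small B ->
  small (fun y => exists b, B b /\ y = h b).
Proof.
  intros [g [gh hg]] HB [f [fi fA]]. apply HB. exists (fun x => g (f x)). split.
  - intros x y E. apply fi. rewrite <- (hg (f x)), <- (hg (f y)), E. auto.
  - intro x. destruct (fA x) as [b [Bb ->]]. rewrite gh. auto.
Qed.

Lemma small_preimage (h : K -> K) (B : K -> Prop) : bij h -> small B ->
  small (fun x => B (h x)).
Proof.
  intros [g [gh hg]] HB [f [fi fA]]. apply HB. exists (fun x => h (f x)). split; auto.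
  intros x y E. apply fi. rewrite <- (gh (f x)), <- (gh (f y)), E. auto.
Qed.


Definition word (w : list (rel K)) : rel K := fold_right (@rcomp K) (@diag K) w.

Lemma word_app w1 w2 x z : (exists y, word w1 x y /\ word w2 y z) -> word (w1 ++ w2) x z.
Proof.
  revert x. induction w1 as [|g w1 IH]; intros x [y [H1 H2]].
  - simpl in *. unfold diag in H1. subst. auto.
  - simpl in *. destruct H1 as [u [Hg Hw]]. exists u. split; auto. apply IH. eauto.
Qed.

Lemma word_rinv w x y : word w x y -> word (rev (map (@rinv K) w)) y x.
Proof.
  revert x. induction w as [|g w IH]; intros x H.
  - simpl in *. unfold diag in *. auto.
  - simpl in *. destruct H as [u [Hg Hw]]. apply word_app. exists u. split; auto.
    simpl. exists x. split. exact Hg. reflexivity.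
Qed.

Definition Gen (Gs : rel K -> Prop) : rel K -> Prop := fun E =>
  subrel (@diag K) E /\ exists ws : list (list (rel K)),
    (forall w g, In w ws -> In g w -> Gs g) /\
    forall x y, E x y -> exists w, In w ws /\ word w x y.

Lemma Gen_cs Gs : (forall g, Gs g -> Gs (rinv g)) -> coarse_structure (Gen Gs).
Proof.
  intro Hinv. constructor.
  - split. intros x y H; exact H. exists [[]]. split.
    + intros w g [<-|[]] [].
    + intros x y H. exists []. split; [left; auto|exact H].
  - intros E [H _]; exact H.
  - intros E [Hd [ws [Hw Hc]]]. split.
    + intros x y H. unfold rinv. apply Hd. unfold diag in *; auto.
    + exists (map (fun w => rev (map (@rinv K) w)) ws). split.
      * intros w g Hw' Hg. apply in_map_iff in Hw'. destruct Hw' as [w0 [<- Hw0]].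
        apply in_rev in Hg. apply in_map_iff in Hg. destruct Hg as [g0 [<- Hg0]].
        apply Hinv. eapply Hw; eauto.
      * intros x y H. destruct (Hc y x H) as [w [Hi Hwd]]. exists (rev (map (@rinv K) w)).
        split. apply in_map_iff. exists w; auto. apply word_rinv; auto.
  - intros E F [Hd [ws [Hw Hc]]] [Hd' [ws' [Hw' Hc']]]. split.
    + intros x y H. exists x. split. apply Hd. unfold diag; auto. apply Hd'. exact H.
    + exists (flat_map (fun w1 => map (fun w2 => w1 ++ w2) ws') ws). split.
      * intros w g Hi Hg. apply in_flat_map in Hi. destruct Hi as [w1 [Hw1 Hi]].
        apply in_map_iff in Hi. destruct Hi as [w2 [<- Hw2]].
        apply in_app_or in Hg. destruct Hg; eauto.
      * intros x z [y [H1 H2]]. destruct (Hc x y H1) as [w1 [Hi1 W1]].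
        destruct (Hc' y z H2) as [w2 [Hi2 W2]]. exists (w1 ++ w2). split.
        -- apply in_flat_map. exists w1. split; auto. apply in_map_iff. exists w2; auto.
        -- apply word_app. eauto.
  - intros E F [Hd [ws [Hw Hc]]] [Hd' [ws' [Hw' Hc']]]. split.
    + intros x y H. left. apply Hd; auto.
    + exists (ws ++ ws'). split.
      * intros w g Hi Hg. apply in_app_or in Hi. destruct Hi; eauto.
      * intros x y [H|H].
        -- destruct (Hc x y H) as [w [Hi W]]. exists w. split; auto. apply in_or_app; auto.
        -- destruct (Hc' x y H) as [w [Hi W]]. exists w. split; auto. apply in_or_app; auto.
  - intros E E' [Hd [ws [Hw Hc]]] Hd' Hs. split; auto. exists ws. split; auto.
Qed.

Lemma Gen_gen Gs E : Gs E -> subrel (@diag K) E -> Gen Gs E.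
Proof.
  intros HG Hd. split; auto. exists [[E]]. split.
  - intros w g [<-|[]] [<-|[]]. auto.
  - intros x y H. exists [E]. split. left; auto. exists y. split; auto. reflexivity.
Qed.

Lemma Gen_unbounded Gs :
  (forall g, Gs g -> forall A, small A -> small (ballset g A)) -> unbounded_ballean (Gen Gs).
Proof.
  intros Himg [x [E [[Hd [ws [Hw Hc]]] Hall]]].
  assert (Hword : forall w, (forall g, In g w -> Gs g) -> forall A, small A -> small (ballset (word w) A)).
  { induction w as [|g w IH]; intros Hg A HA.
    - apply (small_sub _ A); auto. intros y [a [Aa Ha]]. simpl in Ha. unfold diag in Ha. subst. auto.
    - apply (small_sub _ (ballset (word w) (ballset g A))).
      + intros z [a [Aa [y [H1 H2]]]]. exists y. split; auto. exists a. auto.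
      + apply IH. intros; apply Hg; right; auto. apply Himg. apply Hg; left; auto. auto. }
  apply not_small_all.
  apply (small_sub _ (fun y => exists w, In w ws /\ ballset (word w) (fun z => z = x) y)).
  - intros y _. destruct (Hc x y (Hall y I)) as [w [Hi W]]. exists w. split; auto. exists x. auto.
  - apply small_list_union. intros w Hi. apply Hword. intros g Hg. eapply Hw; eauto.
    apply small_single.
Qed.


Definition Rio (io : K -> nat -> K) : rel K :=
  fun x y => x = y \/ exists a n m, x = io a n /\ y = io a m.

Lemma Rio_small io : (forall x n y m, io x n = io y m -> x = y /\ n = m) ->
  forall A, small A -> small (ballset (Rio io) A).
Proof.
  intros Hio A HA [f [fi fA]]. apply HA.
  destruct (choice_fun (fun y (p : K * nat) => ballset (Rio io) A y -> A (fst p) /\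
     ((snd p = 0 /\ fst p = y) \/ (exists a n m, fst p = io a n /\ y = io a m /\ snd p = S m))))
    as [c Hc].
  { intro y. destruct (classic (ballset (Rio io) A y)) as [[a' [Aa' [E|[a [n [m [E1 E2]]]]]]]|Hn].
    - exists (a', 0). intros _. simpl. split; auto.
    - exists (a', S m). intros _. simpl. split; auto. right. exists a, n, m. auto.
    - exists (y, 0). intro; contradiction. }
  apply (prod_absorb _ (fun x => c (f x))).
  - intros x y E. apply fi.
    destruct (Hc (f x) (fA x)) as [_ [[E1 E2]|[a [n [m [E1 [E2 E3]]]]]]];
    destruct (Hc (f y) (fA y)) as [_ [[F1 F2]|[a' [n' [m' [F1 [F2 F3]]]]]]]; rewrite E in *.
    + congruence.
    + congruence.
    + congruence.
    + rewrite E1 in F1. apply Hio in F1. destruct F1 as [-> _]. rewrite E3 in F3.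
      injection F3. intros ->. congruence.
  - intro x. exact (proj1 (Hc (f x) (fA x))).
Qed.

Lemma Rio_sym io x y : Rio io x y -> Rio io y x.
Proof. intros [E|[a [n [m [E1 E2]]]]]. left; auto. right. exists a, m, n. auto. Qed.

Lemma perm_small (g : rel K) : perm_coarse g -> forall A : K -> Prop, small A -> small (ballset g A).
Proof.
  intros [_ [H0 [Hb Hs]]] A HA.
  apply (small_sub _ (fun y => A y \/ exists h, In h H0 /\ (fun y => exists b, A b /\ y = h b) y)).
  - intros y [a [Aa Ha]]. destruct (Hs _ _ Ha) as [->|[h [Hh ->]]]; auto.
    right. exists h. split; auto. exists a; auto.
  - apply small_union; auto. apply (small_list_union (fun h y => exists b, A b /\ y = h b)).
    intros h Hh. apply small_image; auto.
Qed.

Lemma sd_small (g : rel K) : small_discrete_coarse g -> forall A : K -> Prop, small A -> small (ballset g A).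
Proof.
  intros [_ [B [HB Hs]]] A HA.
  apply (small_sub _ (fun y => A y \/ B y)).
  - intros y [a [Aa Ha]]. destruct (Hs _ _ Ha) as [->|[_ By]]; auto.
  - apply small_union; auto.
Qed.

Definition G0 (g : rel K) := perm_coarse g \/ small_discrete_coarse g.

Lemma bij_comp (f g : K -> K) : bij f -> bij g -> bij (fun x => f (g x)).
Proof.
  intros [f' [f1 f2]] [g' [g1 g2]]. exists (fun y => g' (f' y)). split; intros.
  rewrite f1; auto. rewrite g2; auto.
Qed.

Lemma inv_list (H0 : list (K -> K)) : (forall h, In h H0 -> bij h) ->
  exists H1, (forall g, In g H1 -> bij g) /\ forall h, In h H0 -> exists g, In g H1 /\ forall x, g (h x) = x.
Proof.
  induction H0 as [|h H0 IH]; intro Hb.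
  - exists []. split. intros g []. intros h [].
  - destruct IH as [H1 [Hb1 Hc1]]. intros; apply Hb; right; auto.
    destruct (Hb h (or_introl eq_refl)) as [g [g1 g2]].
    exists (g :: H1). split.
    + intros g' [<-|Hg]; auto. exists h; auto.
    + intros h' [<-|Hh]. exists g. split; auto. left; auto.
      destruct (Hc1 h' Hh) as [g' [Hg' E]]. exists g'. split; auto. right; auto.
Qed.

Lemma G0_inv (g : rel K) : G0 g -> G0 (rinv g).
Proof.
  intros [[Hd [H0 [Hb Hs]]]|[Hd [B [HB Hs]]]].
  - left. destruct (inv_list H0 Hb) as [H1 [Hb1 Hc1]]. split.
    + intros x y E. unfold rinv. apply Hd. unfold diag in *; auto.
    + exists H1. split; auto. intros x y H. unfold rinv in H.
      destruct (Hs _ _ H) as [->|[h [Hh ->]]]. left; auto.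
      destruct (Hc1 h Hh) as [g' [Hg' E]]. right. exists g'. split; auto.
  - right. split.
    + intros x y E. unfold rinv. apply Hd. unfold diag in *; auto.
    + exists B. split; auto. intros x y H. unfold rinv in H.
      destruct (Hs _ _ H) as [->|[H1 H2]]. left; auto. right; auto.
Qed.

Lemma word_G0 w : (forall g, In g w -> G0 g) -> exists B, small B /\ exists L : list (K -> K),
  (forall l, In l L -> bij l) /\
  forall x y, ~ B x -> word w x y -> y = x \/ exists l, In l L /\ y = l x.
Proof.
  induction w as [|g w IH]; intro Hg.
  - exists (fun _ : K => False). split. apply small_empty. exists []. split. intros l [].
    intros x y _ H. simpl in H. unfold diag in H. auto.
  - destruct IH as [B [HB [L [HL Hc]]]]. intros; apply Hg; right; auto.
    destruct (Hg g (or_introl eq_refl)) as [[_ [H0 [Hb Hs]]]|[_ [B0 [HB0 Hs]]]].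
    + exists (fun x => B x \/ exists h, In h H0 /\ (fun x => B (h x)) x). split.
      { apply small_union; auto. apply (small_list_union (fun h x => B (h x))).
        intros h Hh. apply small_preimage; auto. }
      exists (L ++ H0 ++ flat_map (fun l => map (fun h => fun x => l (h x)) H0) L). split.
      { intros l Hl. apply in_app_or in Hl. destruct Hl as [Hl|Hl]; auto.
        apply in_app_or in Hl. destruct Hl as [Hl|Hl]; auto.
        apply in_flat_map in Hl. destruct Hl as [l0 [Hl0 Hl]]. apply in_map_iff in Hl.
        destruct Hl as [h [<- Hh]]. apply bij_comp; auto. }
      intros x z Hx [y [Hxy Hyz]]. destruct (Hs _ _ Hxy) as [->|[h [Hh ->]]].
      * destruct (Hc x z (fun H => Hx (or_introl H)) Hyz) as [->|[l [Hl ->]]]; auto.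
        right. exists l. split; auto. apply in_or_app; auto.
      * assert (nB : ~ B (h x)). { intro H. apply Hx. right. exists h; auto. }
        destruct (Hc (h x) z nB Hyz) as [->|[l [Hl ->]]].
        -- right. exists h. split; auto. apply in_or_app; right. apply in_or_app; auto.
        -- right. exists (fun x => l (h x)). split; auto.
           apply in_or_app; right. apply in_or_app; right. apply in_flat_map. exists l.
           split; auto. apply in_map_iff. exists h; auto.
    + exists (fun x => B x \/ B0 x). split. apply small_union; auto.
      exists L. split; auto. intros x z Hx [y [Hxy Hyz]].
      destruct (Hs _ _ Hxy) as [<-|[Bx _]]. 2: { exfalso; apply Hx; auto. }
      apply Hc; auto.
Qed.

Lemma words_G0 (ws : list (list (rel K))) : (forall w g, In w ws -> In g w -> G0 g) ->
  exists B, small B /\ exists L : list (K -> K), (forall l, In l L -> bij l) /\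
  forall x y, ~ B x -> (exists w, In w ws /\ word w x y) -> y = x \/ exists l, In l L /\ y = l x.
Proof.
  induction ws as [|w ws IH]; intro Hw.
  - exists (fun _ : K => False). split. apply small_empty. exists []. split. intros l [].
    intros x y _ [w [[] _]].
  - destruct IH as [B [HB [L [HL Hc]]]]. intros; eapply Hw; eauto. right; auto.
    destruct (word_G0 w) as [B1 [HB1 [L1 [HL1 Hc1]]]]. intros; eapply Hw; eauto. left; auto.
    exists (fun x => B x \/ B1 x). split. apply small_union; auto.
    exists (L ++ L1). split.
    + intros l Hl. apply in_app_or in Hl. destruct Hl; auto.
    + intros x y Hx [w' [[<-|Hi] W]].
      * destruct (Hc1 x y (fun H => Hx (or_intror H)) W) as [->|[l [Hl ->]]]; auto.
        right. exists l. split; auto. apply in_or_app; auto.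
      * destruct (Hc x y (fun H => Hx (or_introl H)) (ex_intro _ w' (conj Hi W))) as [->|[l [Hl ->]]]; auto.
        right. exists l. split; auto. apply in_or_app; auto.
Qed.


Lemma perm_diag : perm_coarse (@diag K).
Proof.
  split. intros x y H; exact H. exists []. split. intros h []. intros x y H. left. symmetry. exact H.
Qed.

Lemma perm_EH (h : K -> K) : bij h -> perm_coarse (EH [h]).
Proof.
  intro hb. split. intros x y H. left. symmetry. exact H.
  exists [h]. split. intros g [<-|[]]; auto. intros x y H; exact H.
Qed.

Lemma ultra : ultranormal (@perm_coarse K).
Proof.
  split.
  - intro Hb. apply not_finite_K. apply bounded_finite. exact Hb.
  - intros A B nA nB Had.
    assert (nA' : ~ finite_set A) by (intro H; apply nA; apply finite_bounded; auto).
    assert (nB' : ~ finite_set B) by (intro H; apply nB; apply finite_bounded; auto).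
    destruct (classic (finite_set (fun x => A x /\ B x))) as [[l Hl]|Hinf].
    2: { apply Hinf.
         destruct (bounded_finite _ (Had _ perm_diag)) as [l Hl]. exists l.
         intros y [Ay By]. apply Hl. split; exists y; split; auto; reflexivity. }
    assert (nAB : ~ finite_set (fun x => A x /\ ~ B x)).
    { intros [l1 Hl1]. apply nA'. exists (l1 ++ l). intros y Ay. apply in_or_app.
      destruct (classic (B y)); auto. }
    assert (nBA : ~ finite_set (fun x => B x /\ ~ A x)).
    { intros [l1 Hl1]. apply nB'. exists (l1 ++ l). intros y By. apply in_or_app.
      destruct (classic (A y)); auto. }
    destruct (seq_extract _ nAB) as [a [ai aA]].
    destruct (seq_extract _ nBA) as [b [bi bB]].
    destruct (choice_fun (fun x z => (exists n, x = a n /\ z = b n) \/ ~ (exists n, x = a n))) as [f Hf].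
    { intro x. destruct (classic (exists n, x = a n)) as [[n ->]|Hn].
      - exists (b n). left. exists n; auto.
      - exists x. right; auto. }
    assert (fa : forall n, f (a n) = b n).
    { intro n. destruct (Hf (a n)) as [[m [E ->]]|Hn].
      - apply ai in E. subst. auto.
      - exfalso. apply Hn. exists n; auto. }
    destruct (involution (fun x => exists n, x = a n) f) as [h [hh hf]].
    { intros x [n ->] [m E]. rewrite fa in E. apply (proj2 (bB n)). rewrite E. apply (proj1 (aA m)). }
    { intros x y [n ->] [m ->] E. rewrite !fa in E. apply bi in E. subst; auto. }
    assert (hb : bij h) by (apply inv_bij; auto).
    destruct (bounded_finite _ (Had _ (perm_EH h hb))) as [l2 Hl2].
    apply (pigeon b l2); auto. intro n. apply Hl2. split.
    + exists (a n). split. apply (proj1 (aA n)). right. exists h. split. left; auto.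
      rewrite hf. symmetry; apply fa. exists n; auto.
    + exists (b n). split. apply (proj1 (bB n)). left. auto.
Qed.

Lemma range_seq : exists a : nat -> K, forall n m, a n = a m -> n = m.
Proof.
  destruct (seq_extract (fun _ => True) not_finite_K) as [a [ai _]]. exists a; auto.
Qed.

Lemma not_ext : ~ extremely_normal (@perm_coarse K).
Proof.
  intros [_ Hext]. destruct range_seq as [a ai].
  destruct (Hext (fun x => exists n, x = a n)) as [E [[_ [H0 [Hb Hs]]] Hall]].
  { intro Hbd. destruct (bounded_finite _ Hbd) as [l Hl].
    apply (pigeon a l); auto. intro n. apply Hl. exists n; auto. }
  apply Kunc.
  destruct (choice_fun (fun x (p : nat * nat) => x = nth (fst p) ((fun z => z) :: H0) (fun z => z) (a (snd p)))) as [c Hc].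
  { intro x. destruct (Hall x) as [a' [[n ->] Ea]].
    destruct (Hs _ _ Ea) as [->|[h [Hh ->]]].
    - exists (0, n). reflexivity.
    - destruct (In_nth H0 h (fun z => z) Hh) as [i [_ Ei]]. exists (S i, n). simpl. rewrite Ei. auto. }
  exists (fun x => to_nat (c x)). intros x y Exy. apply to_nat_inj in Exy.
  rewrite (Hc x), (Hc y), Exy. reflexivity.
Qed.

Lemma strict : exists E, cjoin (@small_discrete_coarse K) (@perm_coarse K) E /\ ~ perm_coarse E.
Proof.
  destruct range_seq as [a ai].
  exists (EB (fun x => exists n, x = a n)). split.
  - intros C _ H1 _. apply H1. split. intros x y H. left; exact H.
    exists (fun x => exists n, x = a n). split.
    + intros [f [fi fA]]. apply Kunc.
      destruct (choice_fun (fun x n => f x = a n)) as [c Hc].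
      { intro x. destruct (fA x) as [n E]. exists n; auto. }
      exists c. intros x y E. apply fi. rewrite Hc, Hc, E. auto.
    + intros x y H; exact H.
  - intros [_ [H0 [_ Hs]]]. apply (pigeon a (a 0 :: map (fun h => h (a 0)) H0)); auto.
    intro n. destruct (Hs (a 0) (a n)) as [->|[h [Hh ->]]].
    + right. split; [exists 0|exists n]; auto.
    + left; auto.
    + right. apply in_map_iff. exists h; auto.
Qed.

Lemma cjoin_sub_Gen (Gs : rel K -> Prop) : (forall g, Gs g -> Gs (rinv g)) -> (forall g, G0 g -> Gs g) ->
  forall E, cjoin (@small_discrete_coarse K) (@perm_coarse K) E -> Gen Gs E.
Proof.
  intros Hi HG E HE. apply HE.
  - apply Gen_cs; auto.
  - intros F HF. apply Gen_gen. apply HG; right; auto. exact (proj1 HF).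
  - intros F HF. apply Gen_gen. apply HG; left; auto. exact (proj1 HF).
Qed.

Lemma cjoin_unb : unbounded_ballean (cjoin (@small_discrete_coarse K) (@perm_coarse K)).
Proof.
  intros [x [E [HE Hall]]].
  apply (Gen_unbounded G0).
  - intros g [Hg|Hg]. apply perm_small; auto. apply sd_small; auto.
  - exists x, E. split; auto. apply cjoin_sub_Gen; auto. apply G0_inv.
Qed.

Lemma ext_join : extremely_normal (cjoin (@small_discrete_coarse K) (@perm_coarse K)).
Proof.
  split. apply cjoin_unb.
  intros A nA.
  assert (HA : inj_into A).
  { apply NNPP. intro HA. apply nA. destruct K_inh as [x0].
    assert (HE : cjoin (@small_discrete_coarse K) (@perm_coarse K) (EB A)).
    { intros C _ H1 _. apply H1. split. intros x y H; left; exact H.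
      exists A. split; auto. intros x y H; exact H. }
    destruct (classic (exists a, A a)) as [[a Aa]|Hn].
    - exists a, (EB A). split; auto. intros y Ay. right. auto.
    - exists x0, (EB A). split; auto. intros y Ay. exfalso; apply Hn; eauto. }
  destruct HA as [f [fi fA]].
  destruct (involution (fun x => ~ A x) f) as [h [hh hf]].
  { intros x _ H. apply H. apply fA. }
  { intros x y _ _ E. apply fi; auto. }
  exists (EH [h]). split.
  - intros C _ _ H2. apply H2. apply perm_EH. apply inv_bij; auto.
  - intro x. destruct (classic (A x)) as [Ax|nAx].
    + exists x. split; auto. left; auto.
    + exists (f x). split; auto. right. exists h. split. left; auto.
      rewrite <- (hf x nAx). symmetry. apply hh.
Qed.

Lemma not_max : ~ maximal (cjoin (@small_discrete_coarse K) (@perm_coarse K)).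
Proof.
  intros [_ Hmax].
  destruct (absorb (fun _ => True) not_finite_K) as [io [_ io2]].
  assert (Hio : forall x n y m, io x n = io y m -> x = y /\ n = m) by (intros; apply io2; auto).
  set (Gs := fun g : rel K => G0 g \/ subrel g (Rio io)).
  assert (Ginv : forall g, Gs g -> Gs (rinv g)).
  { intros g [Hg|Hg]. left; apply G0_inv; auto. right. intros x y H. apply Rio_sym. apply Hg. exact H. }
  apply (Gen_unbounded Gs).
  - intros g [[Hg|Hg]|Hg] A HA. apply perm_small; auto. apply sd_small; auto.
    apply (small_sub _ (ballset (Rio io) A)). intros y [a [Aa Ha]]. exists a; auto.
    apply Rio_small; auto.
  - apply Hmax.
    + apply Gen_cs; auto.
    + apply cjoin_sub_Gen; auto. intros g Hg; left; auto.
    + exists (Rio io). split.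
      * apply Gen_gen. right. intros x y H; exact H. intros x y H; left; exact H.
      * intro HR. apply (cjoin_sub_Gen G0 G0_inv (fun g H => H)) in HR.
        destruct HR as [_ [ws [Hw Hc]]].
        destruct (words_G0 ws Hw) as [B [HB [L [HL HcL]]]].
        assert (Ha : exists a, ~ B (io a 0)).
        { apply NNPP. intro Hn. apply HB. exists (fun a => io a 0). split.
          - intros x y E. apply Hio in E. tauto.
          - intro a. apply NNPP. intro H. apply Hn. eauto. }
        destruct Ha as [a Ha].
        apply (pigeon (fun m => io a m) (io a 0 :: map (fun l => l (io a 0)) L)).
        { intros n m E. apply Hio in E. tauto. }
        intro m. destruct (HcL (io a 0) (io a m) Ha) as [->|[l [Hl ->]]].
        { apply Hc. right. exists a, 0, m. auto. }
        { left; auto. }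
        { right. apply in_map_iff. exists l; auto. }
Qed.

End Main.

Theorem mainTheorem9 (K : Type)
  (Kunc : ~ exists f : K -> nat, forall x y, f x = f y -> x = y) :
  (forall Y : K -> Prop, bounded (@perm_coarse K) Y <-> finite_set Y) /\
  ultranormal (@perm_coarse K) /\
  ~ extremely_normal (@perm_coarse K) /\
  (forall E, perm_coarse E -> cjoin (@small_discrete_coarse K) (@perm_coarse K) E) /\
  (exists E, cjoin (@small_discrete_coarse K) (@perm_coarse K) E /\ ~ perm_coarse E) /\
  extremely_normal (cjoin (@small_discrete_coarse K) (@perm_coarse K)) /\
  ~ maximal (cjoin (@small_discrete_coarse K) (@perm_coarse K)).
Proof.
  split; [|split; [|split; [|split; [|split; [|split]]]]].
  - intro Y. split. apply bounded_finite. apply finite_bounded; auto.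
  - apply ultra; auto.
  - apply not_ext; auto.
  - intros E HE C _ _ H2. apply H2; auto.
  - apply strict; auto.
  - apply ext_join; auto.
  - apply not_max; auto.
Qed.
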